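(* Let $n\le -1$ be an odd integer. In $\mathbb{F}_2[w]$ one has $$q_n(w)\equiv (w+1)^e\,h(w)\pmod 2,$$ where $e=0$ if $3\nmid n$ and $e=2$ if $3\mid n$, and $h\in\mathbb{F}_2[w]$ is a product of pairwise distinct irreducible polynomials each of degree at least $2$ (so $h$ is squarefree and divisible by neither $w$ nor $w+1$).
   Context: Define $q_n\in\mathbb{Z}[w]$ for odd $n\le -1$ by $q_{-1}=w^3-w^2+2w-7$, $q_{-3}=w^5-2w^4-2w^3+5w^2+3w-9$, $q_{-5}=w^7-2w^6-4w^5+8w^4+4w^3-7w^2+2w-7$, and $q_n=(w^2-1)(q_{n+2}-q_{n+4})+q_{n+6}$ for odd $n<-5$. *)

(* Defs.v *)
From HB Require Import structures.
From mathcomp Require Import all_boot all_order all_algebra.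
Set Implicit Arguments. Unset Strict Implicit. Unset Printing Implicit Defensive.
Import Order.TTheory GRing.Theory Num.Theory.
Local Open Scope ring_scope.

Definition q_m1 : {poly int} := 'X^3 - 'X^2 + 2%:P * 'X - 7%:P.
Definition q_m3 : {poly int} :=
  'X^5 - 2%:P * 'X^4 - 2%:P * 'X^3 + 5%:P * 'X^2 + 3%:P * 'X - 9%:P.
Definition q_m5 : {poly int} :=
  'X^7 - 2%:P * 'X^6 - 4%:P * 'X^5 + 8%:P * 'X^4 + 4%:P * 'X^3
  - 7%:P * 'X^2 + 2%:P * 'X - 7%:P.

(* qtrip k = (q_{-(2k+1)}, q_{-(2k+3)}, q_{-(2k+5)}) *)
Fixpoint qtrip (k : nat) : {poly int} * {poly int} * {poly int} :=
  match k with
  | 0%N => (q_m1, q_m3, q_m5)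
  | k'.+1 => let: (a, b, c) := qtrip k' in
             (b, c, ('X^2 - 1) * (c - b) + a)
  end.

Definition Q (k : nat) : {poly int} := (qtrip k).1.1.

(* q_n for odd n <= -1 : n = -(2k+1), k = (|n| - 1)/2 *)
Definition q (n : int) : {poly int} := Q ((`|n|%N).-1./2).

Definition red2 (p : {poly int}) : {poly 'F_2} := map_poly (fun z : int => z%:~R) p.

(* Main.v *)
Require Import Defs.
From HB Require Import structures.
From mathcomp Require Import all_boot all_order all_algebra.
From Stdlib Require Import Ring_theory Ring InitialRing.
From Stdlib Require BinNat BinPos Pnat.
Import Order.TTheory GRing.Theory Num.Theory.
Local Open Scope ring_scope.

Notation P2 := {poly 'F_2}.

Lemma two0 : (2%:R : P2) = 0.
Proof. by rewrite -polyC_natr; apply/eqP; rewrite polyC_eq0. Qed.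

Lemma oppP2 (x : P2) : - x = x.
Proof. by apply/eqP; rewrite eq_sym -subr_eq0 opprK -mulr2n -mulr_natl two0 mul0r. Qed.

Notation S2 := (Algebra.BaseAddMagma.sort (poly_polynomial__canonical__Algebra_BaseAddMagma 'F_2)).
Lemma P2_rt : ring_theory (0 : S2) 1 +%R *%R (fun x y => x - y) -%R eq.
Proof.
constructor => //.
- exact: add0r. - exact: addrC. - exact: addrA. - exact: mul1r. - exact: mulrC.
- exact: mulrA. - exact: mulrDl. - exact: subrr.
Qed.

Definition b2P (b : bool) : S2 := if b then 1 else 0.

Lemma P2_morph : ring_morph (0 : S2) 1 +%R *%R (fun x y => x - y) -%R eq
  false true xorb andb xorb (fun b => b) Bool.eqb b2P.
Proof.
constructor => //.
- by case; case => /=; rewrite ?addr0 ?add0r // -mulr2n -mulr_natr two0 mulr0.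
- by move=> x y; rewrite oppP2; case: x; case: y => /=; rewrite ?addr0 ?add0r // -mulr2n -mulr_natr two0 mulr0.
- by case; case => /=; rewrite ?mulr0 ?mul0r ?mulr1.
- by move=> x; rewrite oppP2.
- by case; case.
Qed.

Lemma pow_pos_exp (x : S2) p : pow_pos *%R x p = x ^+ BinPos.Pos.to_nat p.
Proof.
elim: p => [p IH|p IH|] /=.
- by rewrite Pnat.Pos2Nat.inj_xI IH exprS -exprD addnn -mul2n.
- by rewrite Pnat.Pos2Nat.inj_xO IH -exprD addnn -mul2n.
- by rewrite expr1.
Qed.

Lemma P2_pow : power_theory (1 : S2) *%R eq BinNat.N.to_nat (@GRing.exp _).
Proof. constructor => x [|p] /=; first by rewrite expr0. by rewrite pow_pos_exp. Qed.

Ltac natcst t := match isnatcst t with true => constr:(BinNat.N.of_nat t) | _ => constr:(InitialRing.NotConstant) end.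

Add Ring P2ring : P2_rt (morphism P2_morph, power_tac P2_pow [natcst]).

Lemma pr_aux (a b : P2) : a + 0 = b + 0 -> a = b.
Proof. by rewrite !addr0. Qed.
Ltac canon t :=
  lazymatch t with
  | @Algebra.add _ ?x ?y => let x := canon x in let y := canon y in constr:((x : P2) + (y : P2))
  | @Algebra.opp _ ?x => let x := canon x in constr:(- (x : P2))
  | @GRing.mul _ ?x ?y => let x := canon x in let y := canon y in constr:((x : P2) * (y : P2))
  | @GRing.exp _ ?x ?n => let x := canon x in let n := eval cbv in n in constr:((x : P2) ^+ n)
  | @Algebra.zero _ => constr:(0 : P2)
  | GRing.one _ => constr:(1 : P2)
  | _ => t
  end.
Ltac pring := apply: pr_aux; try (let x := fresh "xX" in set x := ('X : P2); clearbody x);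
  lazymatch goal with |- ?a = ?b =>
    let a' := canon a in let b' := canon b in change (a' = b') end; ring.

Lemma natrP2 n : (n%:R : P2) = if odd n then 1 else 0.
Proof.
elim: n => [|n IH] //=; rewrite mulrS IH /=.
case: (odd n) => /=. all: pring.
Qed.

Fixpoint bb (j : nat) : P2 :=
  match j with
  | 0%N => 0
  | 1%N => 1
  | (j'.+1 as j1).+1 => 'X * bb j1 + bb j'
  end.

Lemma bbSS j : bb j.+2 = 'X * bb j.+1 + bb j.
Proof. by []. Qed.

Definition rr (k : nat) : P2 := ('X + 1) ^+ 2 + 'X * (bb k.+2) ^+ 2.

Lemma red2D p r : red2 (p + r) = red2 p + red2 r.
Proof. by rewrite /red2 rmorphD. Qed.
Lemma red2B p r : red2 (p - r) = red2 p - red2 r.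
Proof. by rewrite /red2 rmorphB. Qed.
Lemma red2M p r : red2 (p * r) = red2 p * red2 r.
Proof. by rewrite /red2 rmorphM. Qed.
Lemma red2X : red2 'X = 'X.
Proof. by rewrite /red2 map_polyX. Qed.
Lemma red2Xn n : red2 ('X^n) = 'X^n.
Proof. by rewrite /red2 map_polyXn. Qed.
Lemma red2C (m : nat) : red2 ((Posz m)%:P) = m%:R.
Proof. by rewrite /red2 map_polyC /= pmulrn polyC_natr. Qed.
Lemma red2N p : red2 (- p) = - red2 p.
Proof. by rewrite /red2 rmorphN. Qed.
Lemma red21 : red2 1 = 1.
Proof. by rewrite /red2 rmorph1. Qed.

Lemma red2_qm1 : red2 q_m1 = rr 0.
Proof.
rewrite /q_m1 /rr !(red2D, red2B, red2N, red2M, red2X, red2Xn, red2C) !natrP2 /=.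
pring.
Qed.

Lemma red2_qm3 : red2 q_m3 = rr 1.
Proof.
rewrite /q_m3 /rr !(red2D, red2B, red2N, red2M, red2X, red2Xn, red2C) !natrP2 /=.
pring.
Qed.

Lemma red2_qm5 : red2 q_m5 = rr 2.
Proof.
rewrite /q_m5 /rr !(red2D, red2B, red2N, red2M, red2X, red2Xn, red2C) !natrP2 /=.
pring.
Qed.

Lemma rr_rec k : rr k.+3 = ('X^2 - 1) * (rr k.+2 - rr k.+1) + rr k.
Proof.
rewrite /rr (bbSS k.+3) (bbSS k.+2); move: (bb k.+3) (bb k.+2) => u v.
pring.
Qed.

Lemma red2_trip k :
  [/\ red2 (qtrip k).1.1 = rr k, red2 (qtrip k).1.2 = rr k.+1 & red2 (qtrip k).2 = rr k.+2].
Proof.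
elim: k => [|k IH] /=; first by rewrite red2_qm1 red2_qm3 red2_qm5.
move: IH; case: (qtrip k) => [[a b] c] /= [Ha Hb Hc]; split => //.
by rewrite red2D red2M red2B red2B red2Xn red21 Ha Hb Hc rr_rec.
Qed.

Lemma red2Q k : red2 (Q k) = ('X + 1) ^+ 2 + 'X * (bb k.+2) ^+ 2.
Proof. by rewrite /Q; case: (red2_trip k). Qed.

Lemma bb3 j : bb j.+3 = ('X + 1) ^+ 2 * bb j.+1 + 'X * bb j.
Proof. rewrite (bbSS j.+1) (bbSS j); move: (bb j.+1) (bb j) => u v. pring. Qed.

Lemma bb_at1 j : (bb j).[1] = if (3 %| j)%N then 0 else 1.
Proof.
elim/ltn_ind: j => -[|[|[|j]]] IH.
- by rewrite /= horner0.
- by rewrite /= hornerC.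
- by rewrite /= !hornerE.
have E : (3 %| j.+3)%N = (3 %| j)%N by rewrite (_ : j.+3 = 3 + j)%N // dvdn_addr.
have l1 : (j < j.+3)%N by rewrite ltnS (leq_trans (leqnSn j) (leqnSn j.+1)).
have l2 : (j.+1 < j.+3)%N by rewrite ltnS leqnSn.
rewrite bb3 !hornerE E (IH j) // (IH j.+1) //.
have -> : (1 + 1 : 'F_2) = 0 by apply/eqP.
by rewrite expr0n mul0r add0r.
Qed.

Lemma bb_dvd j : (3 %| j)%N -> ('X + 1) ^+ 2 %| bb j.
Proof.
elim/ltn_ind: j => -[|[|[|j]]] IH //.
have E : (3 %| j.+3)%N = (3 %| j)%N by rewrite (_ : j.+3 = 3 + j)%N // dvdn_addr.
rewrite E => Hj.
have l1 : (j < j.+3)%N by rewrite ltnS (leq_trans (leqnSn j) (leqnSn j.+1)).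
rewrite bb3 dvdp_add //; first exact: dvdp_mulIl.
by apply: dvdp_mull; apply: IH.
Qed.

From Stdlib Require Import Classical.

Lemma F2_cases (x : 'F_2) : x = 0 \/ x = 1.
Proof. by case: x => -[|[|m]] Hm; [left|right|]; try apply: val_inj. Qed.

Lemma irr_factor (g : P2) : (1 < size g)%N -> exists2 p, irreducible_poly p & p %| g.
Proof.
move Hn: (size g) => n; move: n g Hn; elim/ltn_ind => n IH g Hn Hg.
case: (classic (irreducible_poly g)) => Hi; first by exists g.
have [q [Hq1 Hqg Hqe]] : exists q : P2, [/\ size q != 1%N, q %| g & ~~ (q %= g)].
  apply: NNPP => Hno; apply: Hi; split; first by rewrite Hn.
  move=> q Hq1 Hqg; apply: NNPP => Hqe; apply: Hno; exists q; split => //.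
  by apply/negP.
have g0 : g != 0 by rewrite -size_poly_eq0 Hn -lt0n (ltn_trans _ Hg).
have q0 : q != 0 by apply: contraNneq g0 => Hq; move: Hqg; rewrite Hq dvd0p.
have Hle := dvdp_leq g0 Hqg.
have Hne : size q != size g by apply: contra Hqe => /eqP Hs; rewrite -dvdp_size_eqp // Hs.
have Hlt : (size q < n)%N by rewrite -Hn ltn_neqAle Hne Hle.
have Hq1' : (1 < size q)%N.
  by rewrite ltn_neqAle eq_sym Hq1 lt0n size_poly_eq0 q0.
have [p Hp Hpq] := IH _ Hlt q erefl Hq1'.
by exists p => //; apply: dvdp_trans Hpq Hqg.
Qed.

Lemma factor_sf (g : P2) : g != 0 -> ~~ root g 0 -> ~~ root g 1 ->
  (forall p, irreducible_poly p -> ~~ (p * p %| g)) ->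
  exists s : seq P2, [/\ uniq s,
    (forall p, p \in s -> irreducible_poly p /\ (2 <= (size p).-1)%N) &
    g = \prod_(p <- s) p].
Proof.
move Hn: (size g) => n; move: n g Hn; elim/ltn_ind => n IH g Hn g0 r0 r1 Hsf.
case: (leqP n 1) => Hn1.
  have /size_poly1P [c c0 Hc] : size g == 1%N.
    by rewrite eqn_leq {1}Hn Hn1 /= lt0n size_poly_eq0.
  exists [::]; split => //; rewrite big_nil Hc.
  by case: (F2_cases c) c0 => -> //.
have [p Hp Hpg] : exists2 p : P2, irreducible_poly p & p %| g.
  by apply: irr_factor; rewrite Hn.
have p0 := irredp_neq0 Hp.
set g2 := g %/ p.
have Hg : g = g2 * p by rewrite divpK.
have g20 : g2 != 0 by apply: contraNneq g0 => H; rewrite Hg H mul0r.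
have Hsz : size g = (size g2 + size p).-1 by rewrite Hg size_mul.
have Hp1 : (1 < size p)%N by case: Hp.
have Hlt : (size g2 < n)%N.
  rewrite -Hn Hsz; move: Hp1; case: (size p) => [|[|k]] //= _.
  by rewrite addnS /= -[X in (X < _)%N]addn0 ltn_add2l.
have Hr x : root g2 x -> root g x by rewrite Hg rootM => ->.
have [s [Hu Hs Hprod]] : exists s : seq P2, [/\ uniq s,
    (forall p, p \in s -> irreducible_poly p /\ (2 <= (size p).-1)%N) &
    g2 = \prod_(p <- s) p].
  apply: (IH _ Hlt g2 erefl g20).
  - by apply: contra r0; apply: Hr.
  - by apply: contra r1; apply: Hr.
  - move=> q Hq; apply: contra (Hsf q Hq) => H.
    by rewrite Hg; apply: dvdp_mulr.
have pns : p \notin s.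
  apply/negP => Hin; move: (Hsf p Hp); rewrite Hg Hprod (big_rem p Hin) /=.
  by rewrite mulrAC (dvdp_mulr _ (dvdpp _)).
exists (p :: s); split.
- by rewrite /= pns Hu.
- move=> q; rewrite inE => /orP [/eqP -> | /Hs //]; split => //.
  have : size p != 2%N.
    apply/eqP => /poly2_root [x Hx].
    have : root g x.
      by rewrite Hg rootM Hx orbT.
    by case: (F2_cases x) => ->; apply/negP.
  by move: Hp1; case: (size p) => [|[|[|k]]] //=.
- by rewrite big_cons Hg Hprod mulrC.
Qed.

Lemma dvd_sq_deriv (p g : P2) : p * p %| g -> p %| g^`().
Proof.
move=> H; rewrite -(divpK H); set r := g %/ (p * p).
rewrite !derivM; apply: dvdp_add; first by apply: dvdp_mull; apply: dvdp_mulr.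
apply: dvdp_mull; apply: dvdp_add; first exact: dvdp_mull.
exact: dvdp_mulIl.
Qed.

Lemma size2_noroot (p g : P2) : size p = 2%N -> p %| g -> ~~ root g 0 -> ~~ root g 1 -> False.
Proof.
move=> /poly2_root [x Hx] Hpg r0 r1.
have : root g x.
  by rewrite -dvdp_XsubCl (dvdp_trans _ Hpg) // dvdp_XsubCl.
by case: (F2_cases x) => ->; apply/negP.
Qed.

Lemma one1F : (1 + 1 : 'F_2) = 0.
Proof. by apply/eqP. Qed.

Lemma main_j (j : nat) : exists s : seq P2,
    [/\ uniq s,
        (forall p, p \in s -> irreducible_poly p /\ (2 <= (size p).-1)%N) &
        ('X + 1) ^+ 2 + 'X * (bb j) ^+ 2 = ('X + 1) ^+ (if (3 %| j)%N then 2 else 0) * \prod_(p <- s) p].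
Proof.
case H3: (3 %| j)%N.
- have /dvdpP [c Hc] := bb_dvd j H3.
  set h : P2 := 1 + 'X * (('X + 1) * c) * (('X + 1) * c).
  have r0 : ~~ root h 0.
    by rewrite /root /h !hornerE oner_neq0.
  have r1 : ~~ root h 1.
    by rewrite /root /h !(hornerD, hornerM, hornerX, hornerC) one1F !(mul0r, mulr0) addr0 oner_neq0.
  have h0 : h != 0 by apply: contra r0 => /eqP ->; rewrite root0.
  have sf : forall p, irreducible_poly p -> ~~ (p * p %| h).
    move=> p Hp; apply/negP => Hpp.
    have Hd := dvd_sq_deriv _ _ Hpp.
    have Hph : p %| h by apply: dvdp_trans Hpp; apply: dvdp_mulIl.
    have Hdh : h + 'X * h^`() = 1.
      rewrite /h -polyC1 !(derivD, derivM, derivX, derivC) polyC1.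
      move: (c^`()) => c'; pring.
    have : p %| 1 by rewrite -Hdh dvdp_add // dvdp_mull.
    rewrite dvdp1; case: Hp => Hp1 _ /eqP E; by move: Hp1; rewrite E.
  have [s [Hu Hs Hp]] := factor_sf h h0 r0 r1 sf.
  exists s; split => //; rewrite -Hp /h Hc; pring.
- have b1 : (bb j).[1] = 1 by rewrite bb_at1 H3.
  set b := bb j; set h : P2 := ('X + 1) * ('X + 1) + 'X * b * b.
  have r0 : ~~ root h 0.
    by rewrite /root /h !(hornerD, hornerM, hornerX, hornerC) !(mul0r, mulr0, add0r, addr0, mulr1) oner_neq0.
  have r1 : ~~ root h 1.
    by rewrite /root /h !(hornerD, hornerM, hornerX, hornerC) b1 one1F !(mul0r, mulr0, add0r, addr0, mulr1) oner_neq0.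
  have h0 : h != 0 by apply: contra r0 => /eqP ->; rewrite root0.
  have sf : forall p, irreducible_poly p -> ~~ (p * p %| h).
    move=> p Hp; apply/negP => Hpp.
    have Hd := dvd_sq_deriv _ _ Hpp.
    have Hph : p %| h by apply: dvdp_trans Hpp; apply: dvdp_mulIl.
    have Hdh : h + 'X * h^`() = ('X + 1) * ('X + 1).
      rewrite /h -polyC1 !(derivD, derivM, derivX, derivC) polyC1.
      move: (b^`()) => b'; pring.
    have H2 : p %| ('X + 1) * ('X + 1) by rewrite -Hdh dvdp_add // dvdp_mull.
    have H1 : p %| 'X + 1.
      case Hc: (p %| 'X + 1) => //.
      have Hco : coprimep p ('X + 1) by rewrite irreducible_poly_coprime // Hc.
      by move: H2; rewrite (Gauss_dvdpl _ Hco) Hc.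
    have Hs2 : size p = 2%N.
      have Hsz : size ('X + 1 : P2) = 2%N by rewrite -polyC1 size_XaddC.
      have X0 : ('X + 1 : P2) != 0 by rewrite -size_poly_eq0 Hsz.
      have := dvdp_leq X0 H1; rewrite Hsz => Hle.
      case: Hp => Hp1 _; apply/eqP; rewrite eqn_leq Hle Hp1.
      by [].
    exact: (size2_noroot _ _ Hs2 Hph r0 r1).
  have [s [Hu Hs Hp]] := factor_sf h h0 r0 r1 sf.
  exists s; split => //; rewrite -Hp /h; pring.
Qed.

Lemma div3 (n : int) : ~~ (2 %| n)%Z -> (3 %| n)%Z = (3 %| ((`|n|%N).-1./2).+2)%N.
Proof.
rewrite !dvdzE /=; move: (`|n|%N) => m; rewrite dvdn2 negbK => Hm.
set t := m./2.
have Em : m = t.*2.+1 by rewrite -{1}(odd_double_half m) Hm.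
rewrite Em /= doubleK -(@dvdn_addl 3 3 t.*2.+1) //.
rewrite (_ : (t.*2.+1 + 3 = 2 * t.+2)%N); last by rewrite -mul2n !mulnS !addnS addn0.
by rewrite Gauss_dvdr.
Qed.

Theorem proposition4p1 (n : int) (hn : n <= -1) (hodd : ~~ (2 %| n)%Z) :
  exists s : seq {poly 'F_2},
    [/\ uniq s,
        (forall p, p \in s -> irreducible_poly p /\ (2 <= (size p).-1)%N) &
        red2 (q n) = ('X + 1) ^+ (if (3 %| n)%Z then 2 else 0) * \prod_(p <- s) p].
Proof.
rewrite (div3 n hodd) /q red2Q; exact: main_j.
Qed.
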